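(* Let $(A^1,B^1)$ be an $n_1\times m_1$ bimatrix game, $(A^2,B^2)$ an $n_2\times m_2$ bimatrix game, $K$ a real number with $K>|c|$ for every entry $c$ of $A^1,B^1,A^2,B^2$, and let $(A,B)$ be the sum game $(A^1,B^1)+(A^2,B^2)$ via $K$. If $(x,y)$ is a Nash equilibrium of $(A,B)$, then $0<\sum_{i=1}^{n_1}x_i<1$ and $0<\sum_{j=1}^{m_1}y_j<1$.
   Context: An $n\times m$ bimatrix game $(A,B)$ consists of two real $n\times m$ matrices. A mixed strategy of the row player is a probability vector $x\in\Delta_n=\{x\in\mathbb{R}^n_{\ge 0}:\sum_i x_i=1\}$, of the column player $y\in\Delta_m$; the expected payoffs are $x^TAy$ (row player) and $x^TBy$ (column player). $(x,y)$ is a Nash equilibrium if $x^TAy\ge \hat x^TAy$ for all $\hat x\in\Delta_n$ and $x^TBy\ge x^TB\hat y$ for all $\hat y\in\Delta_m$. The sum game $(A^1,B^1)+(A^2,B^2)$ via $K$ is the $(n_1+n_2)\times(m_1+m_2)$ game $(A,B)$ with $A_{ij}=A^1_{ij}$, $B_{ij}=B^1_{ij}$ if $i\le n_1,j\le m_1$; $A_{ij}=A^2_{i-n_1,j-m_1}$, $B_{ij}=B^2_{i-n_1,j-m_1}$ if $i>n_1,j>m_1$; and $A_{ij}=K$, $B_{ij}=-K$ otherwise. *)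

(* Defs.v *)
From HB Require Import structures.
From mathcomp Require Import all_boot all_order all_algebra.
Set Implicit Arguments. Unset Strict Implicit. Unset Printing Implicit Defensive.
Import Order.TTheory GRing.Theory Num.Theory.
Local Open Scope ring_scope.

Definition mixed_strategy (R : realFieldType) (n : nat) (x : 'rV[R]_n) : Prop :=
  (forall i, 0 <= x 0 i) /\ \sum_(i < n) x 0 i = 1.

Definition payoff (R : realFieldType) (n m : nat)
  (M : 'M[R]_(n, m)) (x : 'rV[R]_n) (y : 'rV[R]_m) : R :=
  \sum_(i < n) \sum_(j < m) x 0 i * M i j * y 0 j.

Definition nash_eq (R : realFieldType) (n m : nat) (A B : 'M[R]_(n, m))
  (x : 'rV[R]_n) (y : 'rV[R]_m) : Prop :=
  mixed_strategy x /\ mixed_strategy y /\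
  (forall xh : 'rV[R]_n, mixed_strategy xh -> payoff A xh y <= payoff A x y) /\
  (forall yh : 'rV[R]_m, mixed_strategy yh -> payoff B x yh <= payoff B x y).

Definition sum_entry (R : realFieldType) (n1 m1 n2 m2 : nat)
  (M1 : 'M[R]_(n1, m1)) (M2 : 'M[R]_(n2, m2)) (c : R)
  (i : 'I_(n1 + n2)) (j : 'I_(m1 + m2)) : R :=
  match split i, split j with
  | inl i1, inl j1 => M1 i1 j1
  | inr i2, inr j2 => M2 i2 j2
  | _, _ => c
  end.

Definition sum_game_A (R : realFieldType) (n1 m1 n2 m2 : nat)
  (A1 : 'M[R]_(n1, m1)) (A2 : 'M[R]_(n2, m2)) (K : R) : 'M[R]_(n1 + n2, m1 + m2) :=
  \matrix_(i, j) sum_entry A1 A2 K i j.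

Definition sum_game_B (R : realFieldType) (n1 m1 n2 m2 : nat)
  (B1 : 'M[R]_(n1, m1)) (B2 : 'M[R]_(n2, m2)) (K : R) : 'M[R]_(n1 + n2, m1 + m2) :=
  \matrix_(i, j) sum_entry B1 B2 (- K) i j.

(* Main.v *)
Require Import Defs.
From HB Require Import structures.
From mathcomp Require Import all_boot all_order all_algebra.
Import Order.TTheory GRing.Theory Num.Theory.
Local Open Scope ring_scope.

Lemma split_l m n (i : 'I_m) : split (lshift n i) = inl i.
Proof. exact: (unsplitK (inl _ i)). Qed.
Lemma split_r m n (i : 'I_n) : split (rshift m i) = inr i.
Proof. exact: (unsplitK (inr _ i)). Qed.

Lemma pos_sum (R : realFieldType) (I : finType) (P : pred I) (a b : I -> R) :
  (forall i, P i -> 0 <= a i) -> (forall i, P i -> 0 < b i) ->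
  0 < \sum_(i | P i) a i -> 0 < \sum_(i | P i) a i * b i.
Proof.
move=> ha hb hs.
have hge : forall i, P i -> 0 <= a i * b i by move=> i Pi; rewrite mulr_ge0 ?ha // ltW ?hb.
rewrite lt_def sumr_ge0 // andbT; apply/negP => /eqP H.
have H0 := psumr_eq0P hge H.
suff : \sum_(i | P i) a i = 0 by move=> E; rewrite E ltxx in hs.
apply: big1 => i Pi; move/eqP: (H0 i Pi); rewrite mulf_eq0 => /orP [/eqP //|].
by rewrite gt_eqF // hb.
Qed.

Lemma dev (R : realFieldType) n (x : 'rV[R]_n) (u : 'I_n -> R) (S : pred 'I_n) i0 :
  mixed_strategy x -> ~~ S i0 ->
  (forall xh, mixed_strategy xh -> \sum_i xh 0 i * u i <= \sum_i x 0 i * u i) ->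
  (forall i, S i -> u i < u i0) -> \sum_(i | S i) x 0 i = 0.
Proof.
move=> [x0 x1] Si0 hN hlt.
have s0 : 0 <= \sum_(i | S i) x 0 i by apply: sumr_ge0.
pose s := \sum_(i | S i) x 0 i.
pose xh := \row_i ((if S i then 0 else x 0 i) + s * (i == i0)%:R).
have hsplit : forall F : 'I_n -> R, \sum_i F i =
    \sum_i (if S i then 0 else F i) + \sum_(i | S i) F i.
  move=> F; rewrite [X in _ + X]big_mkcond -big_split /=.
  by apply: eq_bigr => i _; case: ifP => _; rewrite ?add0r ?addr0.
have hd : forall F : 'I_n -> R, \sum_i (F i * (i == i0)%:R) = F i0.
  move=> F; rewrite (bigD1 i0) //= eqxx mulr1 big1 ?addr0 // => i /negPf ->.
  by rewrite mulr0.
have mx : mixed_strategy xh.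
  split.
    move=> i; rewrite mxE addr_ge0 //; first by case: ifP.
    by rewrite mulr_ge0 // ler0n.
  under eq_bigr do rewrite mxE.
  rewrite big_split /= -mulr_sumr.
  have -> : \sum_i ((i == i0)%:R : R) = 1.
    by rewrite (bigD1 i0) //= eqxx big1 ?addr0 // => i /negPf ->.
  by rewrite mulr1 -x1 [RHS]hsplit.
have := hN xh mx.
under eq_bigr do rewrite mxE mulrDl.
rewrite big_split /=.
under [X in _ + X <= _]eq_bigr do rewrite -mulrA mulrCA.
have -> : \sum_i ((i == i0)%:R * (s * u i)) = s * u i0.
  by rewrite (bigD1 i0) //= eqxx mul1r big1 ?addr0 // => i /negPf ->; rewrite mul0r.
rewrite [X in _ <= X]hsplit.
have -> : \sum_i (if S i then 0 else x 0 i) * u i = \sum_i (if S i then 0 else x 0 i * u i).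
  by apply: eq_bigr => i _; case: ifP; rewrite ?mul0r.
rewrite lerD2l /s mulr_suml => hle.
apply/eqP; rewrite eq_le s0 andbT; apply/negP => /negP; rewrite -ltNge => hs.
have hp : 0 < \sum_(i | S i) x 0 i * (u i0 - u i).
  by apply: pos_sum => // i Si; rewrite subr_gt0 hlt.
move: hp; rewrite ltNge; apply/negP; rewrite negbK.
under eq_bigr do rewrite mulrBr.
by rewrite sumrB subr_le0.
Qed.

Lemma block_dev1 (R : realFieldType) n1 n2 (x : 'rV[R]_(n1 + n2)) (u : 'I_(n1 + n2) -> R)
  (i0 : 'I_n2) : mixed_strategy x ->
  (forall xh, mixed_strategy xh -> \sum_i xh 0 i * u i <= \sum_i x 0 i * u i) ->
  (forall i1, u (lshift n2 i1) < u (rshift n1 i0)) -> \sum_(i < n1) x 0 (lshift n2 i) = 0.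
Proof.
move=> mx hN hlt.
have := @dev R _ x u (fun i : 'I_(n1 + n2) => (i < n1)%N) (rshift n1 i0) mx _ hN _.
rewrite big_split_ord /= [X in _ + X = _]big_pred0 ?addr0; last by move=> i; rewrite ltnNge leq_addr.
have -> : \sum_(i < n1 | (i < n1)%N) x 0 (lshift n2 i) = \sum_(i < n1) x 0 (lshift n2 i).
  by apply: eq_bigl => i; rewrite ltn_ord.
apply; first by rewrite /= ltnNge leq_addr.
by move=> i /=; case: (split_ordP i) => [i1 ->|i2 ->] //=; rewrite ltnNge leq_addr.
Qed.

Lemma block_dev2 (R : realFieldType) n1 n2 (x : 'rV[R]_(n1 + n2)) (u : 'I_(n1 + n2) -> R)
  (i0 : 'I_n1) : mixed_strategy x ->
  (forall xh, mixed_strategy xh -> \sum_i xh 0 i * u i <= \sum_i x 0 i * u i) ->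
  (forall i2, u (rshift n1 i2) < u (lshift n2 i0)) -> \sum_(i < n2) x 0 (rshift n1 i) = 0.
Proof.
move=> mx hN hlt.
have := @dev R _ x u (fun i : 'I_(n1 + n2) => ~~ (i < n1)%N) (lshift n2 i0) mx _ hN _.
rewrite big_split_ord /= [X in X + _ = _]big_pred0 ?add0r; last by move=> i; rewrite ltn_ord.
have -> : \sum_(i < n2 | ~~ (n1 + i < n1)%N) x 0 (rshift n1 i) = \sum_(i < n2) x 0 (rshift n1 i).
  by apply: eq_bigl => i; rewrite ltnNge leq_addr.
apply; first by rewrite /= ltn_ord.
by move=> i /=; case: (split_ordP i) => [i1 ->|i2 ->] //=; rewrite ltn_ord.
Qed.

Lemma payoff_row (R : realFieldType) n m (M : 'M[R]_(n, m)) x y :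
  payoff M x y = \sum_i x 0 i * (\sum_j M i j * y 0 j).
Proof. by apply: eq_bigr => i _; rewrite mulr_sumr; apply: eq_bigr => j _; rewrite mulrA. Qed.

Lemma payoff_col (R : realFieldType) n m (M : 'M[R]_(n, m)) x y :
  payoff M x y = \sum_j y 0 j * (\sum_i x 0 i * M i j).
Proof.
rewrite /payoff exchange_big; apply: eq_bigr => j _; rewrite mulr_sumr.
by apply: eq_bigr => i _; rewrite mulrC.
Qed.

Lemma zero_partl (R : realFieldType) k (f c : 'I_k -> R) :
  (forall j, 0 <= f j) -> \sum_j f j = 0 -> \sum_j c j * f j = 0.
Proof.
move=> h0 hs; have hz := psumr_eq0P (fun j _ => h0 j) hs.
by apply: big1 => j _; rewrite hz // mulr0.
Qed.

Lemma zero_partr (R : realFieldType) k (f c : 'I_k -> R) :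
  (forall j, 0 <= f j) -> \sum_j f j = 0 -> \sum_j f j * c j = 0.
Proof.
move=> h0 hs; have hz := psumr_eq0P (fun j _ => h0 j) hs.
by apply: big1 => j _; rewrite hz // mul0r.
Qed.

Theorem lemma5 (R : realFieldType) (n1 m1 n2 m2 : nat)
  (A1 B1 : 'M[R]_(n1, m1)) (A2 B2 : 'M[R]_(n2, m2)) (K : R)
  (hn1 : (0 < n1)%N) (hm1 : (0 < m1)%N) (hn2 : (0 < n2)%N) (hm2 : (0 < m2)%N)
  (hK1 : forall i j, `|A1 i j| < K /\ `|B1 i j| < K)
  (hK2 : forall i j, `|A2 i j| < K /\ `|B2 i j| < K)
  (x : 'rV[R]_(n1 + n2)) (y : 'rV[R]_(m1 + m2)) :
  nash_eq (sum_game_A A1 A2 K) (sum_game_B B1 B2 K) x y ->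
  0 < \sum_(i < n1) x 0 (lshift n2 i) < 1 /\
  0 < \sum_(j < m1) y 0 (lshift m2 j) < 1.
Proof.
move=> [mx [my [hA hB]]].
pose uA := fun i => \sum_j sum_game_A A1 A2 K i j * y 0 j.
pose vB := fun j => \sum_i x 0 i * sum_game_B B1 B2 K i j.
have hR : forall xh, mixed_strategy xh -> \sum_i xh 0 i * uA i <= \sum_i x 0 i * uA i.
  by move=> xh hxh; have := hA xh hxh; rewrite !payoff_row.
have hC : forall yh, mixed_strategy yh -> \sum_j yh 0 j * vB j <= \sum_j y 0 j * vB j.
  by move=> yh hyh; have := hB yh hyh; rewrite !payoff_col.
have [x0 x1] := mx; have [y0 y1] := my.
rewrite big_split_ord /= in x1; rewrite big_split_ord /= in y1.
have uAl : forall i1, uA (lshift n2 i1) = \sum_(j < m1) A1 i1 j * y 0 (lshift m2 j)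
    + \sum_(j < m2) K * y 0 (rshift m1 j).
  move=> i1; rewrite /uA big_split_ord /=.
  by congr (_ + _); apply: eq_bigr => j _; rewrite /sum_game_A mxE /sum_entry split_l ?split_r ?split_l.
have uAr : forall i2, uA (rshift n1 i2) = \sum_(j < m1) K * y 0 (lshift m2 j)
    + \sum_(j < m2) A2 i2 j * y 0 (rshift m1 j).
  move=> i2; rewrite /uA big_split_ord /=.
  by congr (_ + _); apply: eq_bigr => j _; rewrite /sum_game_A mxE /sum_entry split_r ?split_r ?split_l.
have vBl : forall j1, vB (lshift m2 j1) = \sum_(i < n1) x 0 (lshift n2 i) * B1 i j1
    + \sum_(i < n2) x 0 (rshift n1 i) * (- K).
  move=> j1; rewrite /vB big_split_ord /=.
  by congr (_ + _); apply: eq_bigr => i _; rewrite /sum_game_B mxE /sum_entry split_l ?split_r ?split_l.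
have vBr : forall j2, vB (rshift m1 j2) = \sum_(i < n1) x 0 (lshift n2 i) * (- K)
    + \sum_(i < n2) x 0 (rshift n1 i) * B2 i j2.
  move=> j2; rewrite /vB big_split_ord /=.
  by congr (_ + _); apply: eq_bigr => i _; rewrite /sum_game_B mxE /sum_entry split_r ?split_r ?split_l.
have hAlt : forall i j, A1 i j < K by move=> i j; have [/ltr_normlP [_ ->]] := hK1 i j.
have hA2lt : forall i j, A2 i j < K by move=> i j; have [/ltr_normlP [_ ->]] := hK2 i j.
have hBlt : forall i j, - K < B1 i j by move=> i j; have [_ /ltr_normlP [h _]] := hK1 i j; rewrite ltrNl.
have hB2lt : forall i j, - K < B2 i j by move=> i j; have [_ /ltr_normlP [h _]] := hK2 i j; rewrite ltrNl.
have R1 : \sum_(j < m2) y 0 (rshift m1 j) = 0 -> \sum_(i < n1) x 0 (lshift n2 i) = 0.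
  move=> hq2; apply: (@block_dev1 _ _ _ _ _ (Ordinal hn2) mx hR) => i1.
  rewrite uAl uAr !(@zero_partl _ _ (fun j => y 0 (rshift m1 j))) // !addr0.
  rewrite -subr_gt0 -sumrB; under eq_bigr do rewrite -mulrBl mulrC.
  apply: pos_sum => [j _|j _|]; first exact: y0.
    by rewrite subr_gt0.
  by move: y1; rewrite hq2 addr0 => ->; rewrite ltr01.
have R2 : \sum_(j < m1) y 0 (lshift m2 j) = 0 -> \sum_(i < n2) x 0 (rshift n1 i) = 0.
  move=> hq; apply: (@block_dev2 _ _ _ _ _ (Ordinal hn1) mx hR) => i2.
  rewrite uAl uAr !(@zero_partl _ _ (fun j => y 0 (lshift m2 j))) // !add0r.
  rewrite -subr_gt0 -sumrB; under eq_bigr do rewrite -mulrBl mulrC.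
  apply: pos_sum => [j _|j _|]; first exact: y0.
    by rewrite subr_gt0.
  by move: y1; rewrite hq add0r => ->; rewrite ltr01.
have C1 : \sum_(i < n2) x 0 (rshift n1 i) = 0 -> \sum_(j < m2) y 0 (rshift m1 j) = 0.
  move=> hp2; apply: (@block_dev2 _ _ _ _ _ (Ordinal hm1) my hC) => j2.
  rewrite vBl vBr !(@zero_partr _ _ (fun i => x 0 (rshift n1 i))) // !addr0.
  rewrite -subr_gt0 -sumrB; under eq_bigr do rewrite -mulrBr.
  apply: pos_sum => [j _|j _|]; first exact: x0.
    by rewrite subr_gt0.
  by move: x1; rewrite hp2 addr0 => ->; rewrite ltr01.
have C2 : \sum_(i < n1) x 0 (lshift n2 i) = 0 -> \sum_(j < m1) y 0 (lshift m2 j) = 0.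
  move=> hp; apply: (@block_dev1 _ _ _ _ _ (Ordinal hm2) my hC) => j1.
  rewrite vBl vBr !(@zero_partr _ _ (fun i => x 0 (lshift n2 i))) // !add0r.
  rewrite -subr_gt0 -sumrB; under eq_bigr do rewrite -mulrBr.
  apply: pos_sum => [j _|j _|]; first exact: x0.
    by rewrite subr_gt0.
  by move: x1; rewrite hp add0r => ->; rewrite ltr01.
have p0 : 0 <= \sum_(i < n1) x 0 (lshift n2 i) by apply: sumr_ge0.
have p20 : 0 <= \sum_(i < n2) x 0 (rshift n1 i) by apply: sumr_ge0.
have q0 : 0 <= \sum_(j < m1) y 0 (lshift m2 j) by apply: sumr_ge0.
have q20 : 0 <= \sum_(j < m2) y 0 (rshift m1 j) by apply: sumr_ge0.
have pn0 : \sum_(i < n1) x 0 (lshift n2 i) != 0.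
  by apply/eqP => h; move: x1; rewrite h (R2 (C2 h)) addr0 => /eqP; rewrite eq_sym oner_eq0.
have p2n0 : \sum_(i < n2) x 0 (rshift n1 i) != 0.
  by apply/eqP => h; move/eqP: pn0; apply; apply: R1; apply: C1.
have qn0 : \sum_(j < m1) y 0 (lshift m2 j) != 0.
  by apply/eqP => h; move: y1; rewrite h (C1 (R2 h)) addr0 => /eqP; rewrite eq_sym oner_eq0.
have q2n0 : \sum_(j < m2) y 0 (rshift m1 j) != 0.
  by apply/eqP => h; move/eqP: qn0; apply; apply: C2; apply: R1.
have pp : 0 < \sum_(i < n1) x 0 (lshift n2 i) by rewrite lt_neqAle eq_sym pn0.
have pp2 : 0 < \sum_(i < n2) x 0 (rshift n1 i) by rewrite lt_neqAle eq_sym p2n0.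
have qq : 0 < \sum_(j < m1) y 0 (lshift m2 j) by rewrite lt_neqAle eq_sym qn0.
have qq2 : 0 < \sum_(j < m2) y 0 (rshift m1 j) by rewrite lt_neqAle eq_sym q2n0.
rewrite pp qq /=; split.
  by rewrite -x1 ltrDl.
by rewrite -y1 ltrDl.
Qed.
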